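(* Let $a_k=\ln(k\ln^2k)$ for $k\ge3$ (the coupon weights being $a_3,a_4,\dots$). Then $\lim_{N\to\infty}E[U_j^N]=\infty$ for all $j\ge2$.
   Context: For $N\ge3$ there are coupon types $k\in\{3,\dots,N\}$ with probabilities $a_k/\sum_{i=3}^Na_i$; $U_j^N$ is the number of empty album places of the $j$-th collector when the first collector completes her set (each collector passes duplicates to the next one), with $$E[U_j^N]=\sum_{k=3}^N\int_0^\infty a_k e^{-a_k t}\frac{(a_kt)^{j-1}}{(j-1)!}\prod_{i\ne k,\,3\le i\le N}\big(1-e^{-a_i t}\big)\,dt.$$ *)

(* Defs.v *)
From Stdlib Require Import Reals Lra Lia Arith List ClassicalEpsilon.
Import ListNotations.
Open Scope R_scope.

Definition a (k : nat) : R := ln (INR k * (ln (INR k)) ^ 2).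

Definition improper_int_0_inf (f : R -> R) (l : R) : Prop :=
  (forall b, 0 <= b -> inhabited (Riemann_integrable f 0 b)) /\
  (forall eps, 0 < eps -> exists M, forall b (pr : Riemann_integrable f 0 b),
      M <= b -> Rabs (RiemannInt pr - l) < eps).

(* the value of the improper integral (chosen by Hilbert epsilon;
   meaningful when the integral exists) *)
Definition Int_0_inf (f : R -> R) : R :=
  epsilon (inhabits 0) (improper_int_0_inf f).

(* indices 3..N *)
Definition idx (N : nat) : list nat := seq 3 (N - 2).

Definition integrand (j N k : nat) (t : R) : R :=
  a k * exp (- (a k * t)) * (a k * t) ^ (j - 1) / INR (fact (j - 1)) *
  fold_right Rmult 1
    (map (fun i => if Nat.eq_dec i k then 1 else 1 - exp (- (a i * t))) (idx N)).

Definition EU (j N : nat) : R :=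
  fold_right Rplus 0 (map (fun k => Int_0_inf (integrand j N k)) (idx N)).

(* Main.v *)
Require Import Defs.
From Stdlib Require Import Reals Lra Lia Arith List ClassicalEpsilon.
From Coquelicot Require Import Coquelicot.
Open Scope R_scope.

Lemma ln_le_sub1 y : 0 < y -> ln y <= y - 1.
Proof. intros Hy. pose proof (exp_ineq1_le (ln y)). rewrite exp_ln in H; lra. Qed.

Lemma ln_le_mono x y : 0 < x -> x <= y -> ln x <= ln y.
Proof. intros Hx [H|H]. left; apply ln_increasing; lra. subst; lra. Qed.

Lemma ln3_ge1 : 1 <= ln 3.
Proof. rewrite <- (ln_exp 1). apply ln_le_mono. apply exp_pos. apply exp_le_3. Qed.

Lemma INR_ge3 k : (3 <= k)%nat -> 3 <= INR k.
Proof. intros H. replace 3 with (INR 3) by (simpl; lra). now apply le_INR. Qed.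

Lemma a_facts k : (3 <= k)%nat ->
  1 <= ln (INR k) /\ ln (INR k) <= a k /\
  exp (- a k) = / (INR k * ln (INR k) ^ 2) /\ 1 <= a k.
Proof.
  intros Hk. pose proof (INR_ge3 k Hk) as H3.
  assert (HL : 1 <= ln (INR k)).
  { apply Rle_trans with (ln 3). apply ln3_ge1. apply ln_le_mono; lra. }
  assert (Hp : INR k <= INR k * ln (INR k) ^ 2).
  { assert (1 <= ln (INR k) ^ 2) by nra. nra. }
  assert (Ha : ln (INR k) <= a k). { unfold a. apply ln_le_mono; lra. }
  repeat split; try lra.
  unfold a. rewrite exp_Ropp, exp_ln; [reflexivity|nra].
Qed.

Lemma prod_nonneg (l : list nat) (g : nat -> R) :
  (forall i, In i l -> 0 <= g i) -> 0 <= fold_right Rmult 1 (map g l).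
Proof.
  induction l as [|x l IH]; simpl; intros H. lra.
  apply Rmult_le_pos; auto.
Qed.

Lemma prod_mono (l : list nat) (g h : nat -> R) :
  (forall i, In i l -> 0 <= g i <= h i) ->
  fold_right Rmult 1 (map g l) <= fold_right Rmult 1 (map h l).
Proof.
  induction l as [|x l IH]; simpl; intros H. lra.
  assert (0 <= fold_right Rmult 1 (map g l)) by (apply prod_nonneg; intros; apply H; auto).
  destruct (H x (or_introl eq_refl)).
  apply Rmult_le_compat; auto.
Qed.

Lemma prod_le1 (l : list nat) (g : nat -> R) :
  (forall i, In i l -> 0 <= g i <= 1) -> fold_right Rmult 1 (map g l) <= 1.
Proof.
  intros H. replace 1 with (fold_right Rmult 1 (map (fun _ => 1) l)) at 2.
  apply prod_mono; auto.
  induction l; simpl; auto. rewrite IHl. ring. intros; apply H; simpl; auto.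
Qed.

Lemma sum_mono (l : list nat) (g h : nat -> R) :
  (forall i, In i l -> g i <= h i) ->
  fold_right Rplus 0 (map g l) <= fold_right Rplus 0 (map h l).
Proof.
  induction l as [|x l IH]; simpl; intros H. lra.
  apply Rplus_le_compat; auto.
Qed.

Lemma sum_scal (l : list nat) (g : nat -> R) C :
  fold_right Rplus 0 (map (fun k => C * g k) l) = C * fold_right Rplus 0 (map g l).
Proof. induction l; simpl. ring. rewrite IHl; ring. Qed.

Lemma one_minus_ge_exp x : 0 <= x <= /2 -> exp (-2 * x) <= 1 - x.
Proof.
  intros Hx. pose proof (exp_ineq1_le (2 * x)).
  replace (-2 * x) with (- (2 * x)) by ring. rewrite exp_Ropp.
  pose proof (exp_pos (2*x)).
  apply Rmult_le_reg_r with (exp (2 * x)); auto.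
  rewrite Rinv_l by lra. nra.
Qed.

Definition xs (i : nat) : R := / (INR i * ln (INR i) ^ 2).

Lemma xs_bounds s : (3 <= s)%nat -> 0 <= xs s <= /2 /\
  xs s <= / ln (INR s - 1) - / ln (INR s).
Proof.
  intros Hs. destruct (a_facts s Hs) as [HL _].
  pose proof (INR_ge3 s Hs). unfold xs.
  set (L := ln (INR s)) in *.
  set (L1 := ln (INR s - 1)).
  assert (HL1 : 0 < L1).
  { unfold L1. rewrite <- ln_1. apply ln_increasing; lra. }
  assert (HL1L : L1 <= L). { apply ln_le_mono; lra. }
  assert (Hd : / INR s <= L - L1).
  { assert (E : L1 - L = ln ((INR s - 1) * / INR s)).
    { rewrite ln_mult by (try lra; apply Rinv_0_lt_compat; lra).
      rewrite ln_Rinv by lra. unfold L, L1; ring. }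
    pose proof (ln_le_sub1 ((INR s - 1) * / INR s)).
    assert (0 < (INR s - 1) * / INR s).
    { apply Rmult_lt_0_compat; [lra| apply Rinv_0_lt_compat; lra]. }
    assert ((INR s - 1) * / INR s - 1 = - / INR s) by (field; lra).
    lra. }
  assert (Hpos : 0 < INR s * L ^ 2) by nra.
  split. split. left; apply Rinv_0_lt_compat; auto.
  { apply Rinv_le_contravar; nra. }
  replace (/ L1 - / L) with ((L - L1) * / L1 * / L) by (field; lra).
  replace (/ (INR s * L ^ 2)) with (/ INR s * / L * / L) by (field; lra).
  assert (/ L <= / L1) by (apply Rinv_le_contravar; lra).
  assert (0 < / L) by (apply Rinv_0_lt_compat; lra).
  assert (0 < / INR s) by (apply Rinv_0_lt_compat; lra).
  apply Rmult_le_compat; try nra.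
Qed.

Lemma prod_lb s n : (3 <= s)%nat ->
  exp (-2 * (/ ln (INR s - 1) - / ln (INR (s + n) - 1))) <=
  fold_right Rmult 1 (map (fun i => 1 - xs i) (seq s n)).
Proof.
  revert s. induction n as [|n IH]; intros s Hs; simpl.
  - rewrite Nat.add_0_r. replace (-2 * (/ ln (INR s - 1) - / ln (INR s - 1))) with 0 by ring.
    rewrite exp_0; lra.
  - destruct (xs_bounds s Hs) as [Hx1 Hx2].
    specialize (IH (S s) ltac:(lia)).
    rewrite S_INR in IH. replace (S s + n)%nat with (s + S n)%nat in IH by lia.
    replace (INR s + 1 - 1) with (INR s) in IH by ring.
    eapply Rle_trans; [| apply Rmult_le_compat; [ | | apply one_minus_ge_exp, Hx1 | apply IH]].
    + rewrite <- exp_plus.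
      match goal with |- exp ?u <= exp ?v => destruct (Req_dec u v) as [E|E];
        [rewrite E; lra | left; apply exp_increasing; lra] end.
    + left; apply exp_pos.
    + left; apply exp_pos.
Qed.
Definition Pr (N k : nat) (t : R) : R :=
  fold_right Rmult 1
    (map (fun i => if Nat.eq_dec i k then 1 else 1 - exp (- (a i * t))) (idx N)).

Lemma idx_in N i : In i (idx N) -> (3 <= i <= N)%nat.
Proof. unfold idx. rewrite in_seq. lia. Qed.

Lemma Pr_bounds N k t : 0 <= t -> 0 <= Pr N k t <= 1.
Proof.
  intros Ht. unfold Pr.
  assert (Hf : forall i, In i (idx N) ->
    0 <= (if Nat.eq_dec i k then 1 else 1 - exp (- (a i * t))) <= 1).
  { intros i Hi. apply idx_in in Hi. destruct (a_facts i ltac:(lia)) as (_&_&_&Ha).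
    destruct (Nat.eq_dec i k). lra.
    pose proof (exp_pos (- (a i * t))).
    assert (exp (- (a i * t)) <= 1).
    { rewrite <- exp_0. destruct (Req_dec (- (a i * t)) 0) as [E|E]. rewrite E; lra.
      left; apply exp_increasing. nra. }
    lra. }
  split. apply prod_nonneg; intros; apply Hf; auto. apply prod_le1; auto.
Qed.

Lemma Pr_lb N k t : 1 <= t -> exp (-4) <= Pr N k t.
Proof.
  intros Ht. unfold Pr.
  eapply Rle_trans; [| apply prod_mono with (g := fun i => 1 - xs i)].
  - unfold idx. eapply Rle_trans; [| apply prod_lb; lia].
    assert (H2 : / ln (INR 3 - 1) < 2).
    { replace (INR 3 - 1) with 2 by (simpl; lra).
      pose proof ln_lt_2. pose proof (Rinv_lt_contravar (/2) (ln 2)).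
      rewrite Rinv_inv in H0. apply H0; auto. apply Rmult_lt_0_compat; lra. }
    assert (H0 : 0 <= / ln (INR (3 + (N - 2)) - 1)).
    { left. apply Rinv_0_lt_compat. rewrite <- ln_1. apply ln_increasing. lra.
      pose proof (INR_ge3 (3 + (N-2)) ltac:(lia)). lra. }
    left. apply exp_increasing. lra.
  - intros i Hi. apply idx_in in Hi.
    destruct (a_facts i ltac:(lia)) as (_&_&Hx&Ha).
    destruct (xs_bounds i ltac:(lia)) as [Hb _].
    destruct (Nat.eq_dec i k). lra.
    split. lra. unfold xs. rewrite <- Hx.
    assert (exp (- (a i * t)) <= exp (- a i)).
    { destruct (Req_dec (- (a i * t)) (- a i)) as [E|E]. rewrite E; lra.
      left; apply exp_increasing. nra. }
    lra.
Qed.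
Definition phi (c : R) (m : nat) (t : R) : R :=
  c * exp (- (c * t)) * (c * t) ^ m / INR (fact m).

Definition G (c : R) (m : nat) (t : R) : R :=
  - exp (- (c * t)) * sum_f_R0 (fun i => (c * t) ^ i / INR (fact i)) m.

Lemma G_deriv c m t : is_derive (G c m) t (phi c m t).
Proof.
  induction m as [|m IH].
  - unfold G, phi; simpl. auto_derive. auto. field.
  - apply is_derive_ext with
      (fun t => G c m t + (- exp (- (c * t)) * ((c * t) ^ S m / INR (fact (S m))))).
    { intros u. unfold G. rewrite tech5. match goal with |- ?x = ?y => change (@eq R x y) end. ring. }
    assert (H2 : is_derive (fun t => - exp (- (c * t)) * ((c * t) ^ S m / INR (fact (S m)))) t
                   (phi c (S m) t - phi c m t)).
    { auto_derive. auto.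
      change (match m with 0%nat => 1 | S _ => INR m + 1 end) with (INR (S m)).
      change (fact m + m * fact m)%nat with (fact (S m)).
      unfold phi.
      replace (INR (fact (S m))) with (INR (S m) * INR (fact m)) by (rewrite <- mult_INR; reflexivity).
      pose proof (INR_fact_neq_0 m). pose proof (pos_INR m). rewrite S_INR.
      match goal with |- ?x = ?y => change (@eq R x y) end.
      simpl pow. field. split; lra. }
    pose proof (is_derive_plus _ _ t _ _ IH H2) as H3.
    replace (phi c (S m) t) with (phi c m t + (phi c (S m) t - phi c m t)) by ring.
    exact H3.
Qed.

Lemma phi_cont c m t : continuous (phi c m) t.
Proof. apply (@ex_derive_continuous R_AbsRing R_NormedModule). unfold phi. auto_derive. auto. Qed.
Lemma Pr_cont N k t : continuous (Pr N k) t.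
Proof.
  unfold Pr. generalize (idx N) as l. induction l as [|i l IH]; simpl.
  - apply continuous_const.
  - apply (continuous_mult (fun t => if Nat.eq_dec i k then 1 else 1 - exp (- (a i * t)))
             (fun t => fold_right Rmult 1 (map (fun i0 => if Nat.eq_dec i0 k then 1 else 1 - exp (- (a i0 * t))) l))); auto.
    destruct (Nat.eq_dec i k). apply continuous_const.
    apply (@ex_derive_continuous R_AbsRing R_NormedModule). auto_derive. auto.
Qed.

Lemma integrand_eq j N k : integrand j N k = fun t => phi (a k) (j - 1) t * Pr N k t.
Proof. reflexivity. Qed.

Lemma integrand_cont j N k t : continuous (integrand j N k) t.
Proof.
  rewrite integrand_eq.
  apply (continuous_mult (phi (a k) (j-1)) (Pr N k)). apply phi_cont. apply Pr_cont.
Qed.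

Lemma phi_nonneg c m t : 0 <= c -> 0 <= t -> 0 <= phi c m t.
Proof.
  intros Hc Ht. unfold phi. pose proof (exp_pos (- (c * t))).
  pose proof (INR_fact_lt_0 m).
  apply Rmult_le_pos. apply Rmult_le_pos. apply Rmult_le_pos; lra. apply pow_le; nra.
  left; apply Rinv_0_lt_compat; auto.
Qed.

Lemma sum0 c m : sum_f_R0 (fun i => (c * 0) ^ i / INR (fact i)) m = 1.
Proof.
  induction m. simpl; field. rewrite tech5, IHm. rewrite Rmult_0_r, pow_i by lia. unfold Rdiv; ring.
Qed.

Lemma sum_nonneg c m t : 0 <= c -> 0 <= t -> 0 <= sum_f_R0 (fun i => (c * t) ^ i / INR (fact i)) m.
Proof.
  intros Hc Ht. induction m. simpl; lra. rewrite tech5.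
  assert (0 <= (c * t) ^ S m / INR (fact (S m))).
  { apply Rmult_le_pos. apply pow_le; nra. left; apply Rinv_0_lt_compat, INR_fact_lt_0. }
  lra.
Qed.

Lemma RInt_phi c m x y : RInt (phi c m) x y = G c m y - G c m x.
Proof.
  apply is_RInt_unique. apply (is_RInt_derive (G c m)).
  intros; apply G_deriv. intros; apply phi_cont.
Qed.

Lemma RInt_phi_le1 c m b : 0 <= c -> 0 <= b -> RInt (phi c m) 0 b <= 1.
Proof.
  intros Hc Hb. rewrite RInt_phi. unfold G. rewrite sum0.
  pose proof (sum_nonneg c m b Hc Hb). pose proof (exp_pos (- (c * b))).
  rewrite Rmult_0_r, Ropp_0, exp_0. nra.
Qed.
Lemma improper_of (f : R -> R) B : (forall t, continuous f t) ->
  (forall t, 0 <= t -> 0 <= f t) -> (forall b, 0 <= b -> RInt f 0 b <= B) ->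
  exists l, improper_int_0_inf f l /\ (forall b, 0 <= b -> RInt f 0 b <= l).
Proof.
  intros Hc Hp HB.
  assert (exRI : forall x y, ex_RInt f x y) by (intros; apply (@ex_RInt_continuous R_CompleteNormedModule); auto).
  assert (mono : forall b1 b2, 0 <= b1 <= b2 -> RInt f 0 b1 <= RInt f 0 b2).
  { intros b1 b2 Hb. rewrite <- (RInt_Chasles f 0 b1 b2) by auto.
    assert (0 <= RInt f b1 b2) by (apply RInt_ge_0; try lra; auto; intros; apply Hp; lra).
    change (plus (RInt f 0 b1) (RInt f b1 b2)) with (RInt f 0 b1 + RInt f b1 b2). lra. }
  set (E := fun y => exists b, 0 <= b /\ y = RInt f 0 b).
  destruct (completeness E) as [l [Hub Hleast]].
  { exists B. intros y [b [Hb ->]]. auto. }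
  { exists (RInt f 0 0). exists 0. split; auto; lra. }
  exists l. split.
  - split. intros b Hb. constructor. apply ex_RInt_Reals_0, exRI.
    intros eps He. destruct (classic (exists b, 0 <= b /\ l - eps < RInt f 0 b)) as [[b0 [Hb0 Hlt]]|Hn].
    + exists b0. intros b pr Hb. rewrite <- RInt_Reals.
      assert (RInt f 0 b <= l) by (apply Hub; exists b; split; auto; lra).
      assert (RInt f 0 b0 <= RInt f 0 b) by (apply mono; lra).
      apply Rabs_def1; lra.
    + exfalso. assert (l <= l - eps); [|lra]. apply Hleast.
      intros y [b [Hb ->]]. apply Rnot_lt_le. intro; apply Hn; eauto.
  - intros b Hb. apply Hub. exists b; auto.
Qed.

Lemma improper_unique f l1 l2 : improper_int_0_inf f l1 -> improper_int_0_inf f l2 -> l1 = l2.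
Proof.
  intros [H1 H1'] [_ H2']. destruct (Req_dec l1 l2) as [E|E]; auto. exfalso.
  set (eps := Rabs (l1 - l2) / 2).
  assert (He : 0 < eps) by (unfold eps; pose proof (Rabs_pos_lt (l1 - l2)); assert (l1 - l2 <> 0) by lra; specialize (H H0); lra).
  destruct (H1' eps He) as [M1 HM1]. destruct (H2' eps He) as [M2 HM2].
  set (b := Rmax 0 (Rmax M1 M2)).
  destruct (H1 b (Rmax_l _ _)) as [pr].
  assert (M1 <= b) by (unfold b; eapply Rle_trans; [apply Rmax_l|apply Rmax_r]).
  assert (M2 <= b) by (unfold b; eapply Rle_trans; [apply Rmax_r|apply Rmax_r]).
  specialize (HM1 b pr H). specialize (HM2 b pr H0).
  unfold eps in *. revert HM1 HM2. split_Rabs; lra.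
Qed.

Lemma Int_eq f l : improper_int_0_inf f l -> Int_0_inf f = l.
Proof.
  intros H. apply (improper_unique f). unfold Int_0_inf. apply epsilon_spec. eauto. auto.
Qed.
Lemma exRI_g (f : R -> R) x y : (forall t, continuous f t) -> ex_RInt f x y.
Proof. intros; apply (@ex_RInt_continuous R_CompleteNormedModule); auto. Qed.

Lemma term_facts j N k : (2 <= j)%nat -> (3 <= k)%nat ->
  exists l, improper_int_0_inf (integrand j N k) l /\
    exp (-4) / (2 * INR (fact (j - 1))) * / (INR k * ln (INR k)) <= l.
Proof.
  intros Hj Hk.
  destruct (a_facts k Hk) as (HL & HLa & Hx & Ha).
  destruct (xs_bounds k Hk) as [[Hx0 Hx2] _].
  set (c := a k) in *. set (m := (j - 1)%nat). set (f := integrand j N k).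
  assert (Hfe : forall t, f t = phi c m t * Pr N k t) by reflexivity.
  assert (Hfc : forall t, continuous f t) by (intros; apply integrand_cont).
  assert (Hpc : forall t, continuous (phi c m) t) by (intros; apply phi_cont).
  assert (Hf0 : forall t, 0 <= t -> 0 <= f t).
  { intros t Ht. rewrite Hfe. apply Rmult_le_pos. apply phi_nonneg; lra. apply Pr_bounds; auto. }
  assert (Hfphi : forall t, 0 <= t -> f t <= phi c m t).
  { intros t Ht. rewrite Hfe. pose proof (phi_nonneg c m t ltac:(lra) Ht).
    destruct (Pr_bounds N k t Ht). nra. }
  destruct (improper_of f 1 Hfc Hf0) as [l [Hl Hlb]].
  { intros b Hb. eapply Rle_trans; [| apply (RInt_phi_le1 c m b); lra].
    apply RInt_le; auto using exRI_g. intros; apply Hfphi; lra. }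
  exists l. split; auto.
  set (F := INR (fact m)). assert (HF : 0 < F) by apply INR_fact_lt_0.
  set (K := exp (-4) * (c / F)).
  assert (HK : 0 < K). { unfold K. apply Rmult_lt_0_compat. apply exp_pos. apply Rdiv_lt_0_compat; lra. }
  assert (Hlow : K * (exp (- c) - exp (- c) * exp (- c)) <= RInt f 1 2).
  { apply Rle_trans with (RInt (fun t => scal K (phi c 0 t)) 1 2).
    - rewrite (@RInt_scal R_CompleteNormedModule); [| apply exRI_g, phi_cont].
      rewrite RInt_phi. unfold G. simpl. change (scal K ?x) with (K * x).
      replace (- (c * 2)) with (- c + - c) by ring. rewrite exp_plus.
      rewrite Rmult_1_r. right. field.
    - apply RInt_le; try lra; auto using exRI_g.
      + apply exRI_g. intros t. apply (continuous_scal_r K (phi c 0)). apply phi_cont.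
      + intros t Ht. change (scal K (phi c 0 t)) with (K * phi c 0 t). rewrite Hfe.
        assert (H1 : exp (-4) <= Pr N k t) by (apply Pr_lb; lra).
        assert (Hct : 1 <= c * t) by nra.
        assert (Hpow : c * t <= (c * t) ^ m).
        { rewrite <- (pow_1 (c * t)) at 1. apply Rle_pow; auto. unfold m; lia. }
        unfold phi, K. simpl pow. simpl fact. simpl INR.
        pose proof (exp_pos (- (c * t))). pose proof (exp_pos (-4)).
        fold F.
        replace (exp (-4) * (c / F) * (c * exp (- (c * t)) * 1 / 1))
          with ((c * exp (- (c * t)) / F) * (c * exp (-4))) by (field; lra).
        replace (c * exp (- (c * t)) * (c * t) ^ m / F * Pr N k t)
          with ((c * exp (- (c * t)) / F) * ((c * t) ^ m * Pr N k t)) by (field; lra).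
        apply Rmult_le_compat_l. apply Rmult_le_pos. nra. left; apply Rinv_0_lt_compat; lra.
        apply Rmult_le_compat; nra. }
  assert (H02 : RInt f 1 2 <= RInt f 0 2).
  { rewrite <- (RInt_Chasles f 0 1 2) by auto using exRI_g.
    assert (0 <= RInt f 0 1) by (apply RInt_ge_0; try lra; auto using exRI_g; intros; apply Hf0; lra).
    change (plus (RInt f 0 1) (RInt f 1 2)) with (RInt f 0 1 + RInt f 1 2). lra. }
  specialize (Hlb 2 ltac:(lra)).
  apply Rle_trans with (K * (exp (- c) - exp (- c) * exp (- c))); [| lra].
  rewrite Hx. unfold xs in Hx0, Hx2.
  set (e := / (INR k * ln (INR k) ^ 2)) in *.
  set (L := ln (INR k)) in *.
  pose proof (INR_ge3 k Hk).
  assert (HY : / (INR k * L) <= c * e).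
  { replace (/ (INR k * L)) with (L * e) by (unfold e; field; lra).
    apply Rmult_le_compat_r; lra. }
  unfold K. fold m F.
  replace (exp (-4) / (2 * F) * / (INR k * L)) with ((exp (-4) / F) * (/ (INR k * L) / 2)) by (field; lra).
  replace (exp (-4) * (c / F) * (e - e * e)) with ((exp (-4) / F) * (c * (e - e * e))) by (field; lra).
  apply Rmult_le_compat_l. apply Rdiv_le_0_compat; [left; apply exp_pos | lra].
  assert (0 <= c * e * (/ 2 - e)) by (apply Rmult_le_pos; [apply Rmult_le_pos|]; lra).
  lra.
Qed.
Lemma loglog_step s : (2 <= s)%nat ->
  ln (ln (INR (S s))) - ln (ln (INR s)) <= / (INR s * ln (INR s)).
Proof.
  intros Hs. assert (H2 : 2 <= INR s) by (replace 2 with (INR 2) by (simpl; lra); apply le_INR; auto).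
  rewrite S_INR.
  set (L := ln (INR s)). set (L' := ln (INR s + 1)).
  assert (HL : 0 < L) by (unfold L; rewrite <- ln_1; apply ln_increasing; lra).
  assert (HLL : L <= L') by (apply ln_le_mono; lra).
  assert (Hd : L' - L <= / INR s).
  { assert (E : L' - L = ln ((INR s + 1) * / INR s)).
    { rewrite ln_mult by (try lra; apply Rinv_0_lt_compat; lra).
      rewrite ln_Rinv by lra. unfold L, L'; ring. }
    pose proof (ln_le_sub1 ((INR s + 1) * / INR s)).
    assert (0 < (INR s + 1) * / INR s) by (apply Rmult_lt_0_compat; [lra| apply Rinv_0_lt_compat; lra]).
    assert ((INR s + 1) * / INR s - 1 = / INR s) by (field; lra).
    lra. }
  assert (E2 : ln L' - ln L = ln (L' * / L)).
  { rewrite ln_mult by (try lra; apply Rinv_0_lt_compat; lra). rewrite ln_Rinv by lra. ring. }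
  rewrite E2. eapply Rle_trans. apply ln_le_sub1. apply Rmult_lt_0_compat; [lra|apply Rinv_0_lt_compat; lra].
  replace (L' * / L - 1) with ((L' - L) * / L) by (field; lra).
  replace (/ (INR s * L)) with (/ INR s * / L) by (field; lra).
  apply Rmult_le_compat_r. left; apply Rinv_0_lt_compat; lra. auto.
Qed.

Lemma sum_lb s n : (2 <= s)%nat ->
  ln (ln (INR (s + n))) - ln (ln (INR s)) <=
  fold_right Rplus 0 (map (fun k => / (INR k * ln (INR k))) (seq s n)).
Proof.
  revert s. induction n as [|n IH]; intros s Hs; simpl.
  - rewrite Nat.add_0_r. lra.
  - specialize (IH (S s) ltac:(lia)). replace (S s + n)%nat with (s + S n)%nat in IH by lia.
    pose proof (loglog_step s Hs). lra.
Qed.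

Theorem mainTheorem14 :
  forall j : nat, (2 <= j)%nat ->
    (forall N k : nat, (3 <= k <= N)%nat ->
       exists l, improper_int_0_inf (integrand j N k) l) /\
    cv_infty (fun N => EU j N).
Proof.
  intros j Hj. split.
  - intros N k Hk. destruct (term_facts j N k Hj ltac:(lia)) as [l [Hl _]]. eauto.
  - set (C := exp (-4) / (2 * INR (fact (j - 1)))).
    assert (HC : 0 < C).
    { unfold C. apply Rdiv_lt_0_compat. apply exp_pos. pose proof (INR_fact_lt_0 (j-1)). lra. }
    assert (Hlb : forall N, (3 <= N)%nat ->
              C * (ln (ln (INR (N + 1))) - ln (ln (INR 3))) <= EU j N).
    { intros N HN. unfold EU.
      eapply Rle_trans; [| apply sum_mono with (g := fun k => C * / (INR k * ln (INR k)))].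
      - rewrite sum_scal. apply Rmult_le_compat_l. lra. unfold idx.
        replace (N + 1)%nat with (3 + (N - 2))%nat by lia. apply sum_lb. lia.
      - intros k Hk. apply idx_in in Hk.
        destruct (term_facts j N k Hj ltac:(lia)) as [l [Hl Hl2]].
        rewrite (Int_eq _ _ Hl). exact Hl2. }
    intros M. set (X := M / C + ln (ln (INR 3))).
    destruct (INR_unbounded (exp (exp X))) as [N0 HN0].
    exists (max N0 3). intros n Hn.
    specialize (Hlb n ltac:(lia)).
    assert (H1 : exp (exp X) < INR (n + 1)).
    { eapply Rlt_le_trans. apply HN0. apply le_INR. lia. }
    assert (H2 : exp X < ln (INR (n + 1))).
    { rewrite <- (ln_exp (exp X)). apply ln_increasing; auto. apply exp_pos. }
    assert (H3 : X < ln (ln (INR (n + 1)))).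
    { rewrite <- (ln_exp X). apply ln_increasing; auto. apply exp_pos. }
    assert (M = C * (X - ln (ln (INR 3)))) by (unfold X; field; lra).
    assert (C * (X - ln (ln (INR 3))) < C * (ln (ln (INR (n + 1))) - ln (ln (INR 3)))).
    { apply Rmult_lt_compat_l; lra. }
    lra.
Qed.
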